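(* Let $K_c=\operatorname{conv}\big(\mathbb{S}^{d-1}\cup\{\boldsymbol v_i\mid i\in I\}\big)\subset\mathbb{E}^d$ be a cap body and $i\in I$. Then the vertex $\boldsymbol v_i$ is illuminated by the direction $\boldsymbol u\in\mathbb{S}^{d-1}$ if and only if the closed spherical cap $C_i=\{\boldsymbol p\in\mathbb{S}^{d-1}\mid\langle\boldsymbol p,\boldsymbol v_i\rangle\ge 1\}$ is contained in the open hemisphere $\operatorname{Hem}_{-\boldsymbol u}$.
   Context: $\mathbb{S}^{d-1}$ is the unit sphere centred at the origin and $B^d$ the closed unit ball. A cap body is $\operatorname{conv}(\mathbb{S}^{d-1}\cup\{\boldsymbol v_i\mid i\in I\})$ where $\{\boldsymbol v_i\}$ is a countable subset of $\mathbb{E}^d\setminus B^d$ such that for distinct $i,j$ the segment $\overline{\boldsymbol v_i\boldsymbol v_j}$ intersects $B^d$; the $\boldsymbol v_i$ are its vertices. A direction $\boldsymbol u\in\mathbb{S}^{d-1}$ illuminates a boundary point $\boldsymbol p$ of $K_c$ if $\boldsymbol p+\lambda\boldsymbol u$ is in the interior of $K_c$ for some $\lambda>0$. For a unit vector $\boldsymbol w$, $\operatorname{Hem}_{\boldsymbol w}=\{\boldsymbol x\in\mathbb{S}^{d-1}\mid\langle\boldsymbol x,\boldsymbol w\rangle>0\}$. *)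

(* Defs.v *)
From HB Require Import structures.
From mathcomp Require Import all_boot all_order all_algebra.
From mathcomp Require Import classical_sets cardinality reals.
Set Implicit Arguments. Unset Strict Implicit. Unset Printing Implicit Defensive.
Import Order.TTheory GRing.Theory Num.Theory.
Local Open Scope ring_scope.
Local Open Scope classical_set_scope.

Section CapBody.
Variables (R : realType) (d : nat).
Notation vec := 'rV[R]_d.

Definition dotp (x y : vec) : R := \sum_(k < d) x 0 k * y 0 k.
Definition enorm (x : vec) : R := Num.sqrt (dotp x x).

Definition sphere : set vec := [set x | enorm x = 1].
Definition ball_unit : set vec := [set x | enorm x <= 1].

Definition conv (S : set vec) : set vec :=
  [set x | exists (n : nat) (p : 'I_n -> vec) (w : 'I_n -> R),
      (forall k, S (p k)) /\ (forall k, 0 <= w k) /\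
      \sum_(k < n) w k = 1 /\ x = \sum_(k < n) w k *: p k].

Definition interior_e (K : set vec) : set vec :=
  [set x | exists2 e : R, 0 < e & forall y, enorm (y - x) < e -> K y].
Definition closure_e (K : set vec) : set vec :=
  [set x | forall e : R, 0 < e -> exists2 y, K y & enorm (y - x) < e].
Definition boundary_e (K : set vec) : set vec :=
  [set x | closure_e K x /\ ~ interior_e K x].

Definition segment (a b : vec) : set vec :=
  [set x | exists2 t : R, 0 <= t <= 1 & x = (1 - t) *: a + t *: b].

Definition cap_vertices (V : set vec) : Prop :=
  countable V /\ (forall v, V v -> ~ ball_unit v) /\
  (forall v w, V v -> V w -> v <> w -> exists x, segment v w x /\ ball_unit x).

Definition cap_body (V : set vec) : set vec := conv (sphere `|` V).

Definition illuminates (K : set vec) (p u : vec) : Prop :=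
  sphere u /\ boundary_e K p /\
  exists2 lam : R, 0 < lam & interior_e K (p + lam *: u).

Definition Hem (w : vec) : set vec := [set x | sphere x /\ 0 < dotp x w].

Definition cap_of (v : vec) : set vec := [set p | sphere p /\ 1 <= dotp p v].

End CapBody.

(* Main.v *)
Require Import Defs.
From HB Require Import structures.
From mathcomp Require Import all_boot all_order all_algebra.
From mathcomp Require Import classical_sets cardinality reals.
From mathcomp Require Import ring lra.
Import Order.TTheory GRing.Theory Num.Theory.
Local Open Scope ring_scope.
Local Open Scope classical_set_scope.

Section Aux.
Variables (R : realType) (d : nat).
Local Notation vec := 'rV[R]_d.

Lemma dotpC (x y : vec) : dotp x y = dotp y x.
Proof. by apply: eq_bigr => k _; rewrite mulrC. Qed.

Lemma dotpDr (x y z : vec) : dotp x (y + z) = dotp x y + dotp x z.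
Proof. rewrite /dotp -big_split; apply: eq_bigr => k _; by rewrite mxE mulrDr. Qed.

Lemma dotpZr (x y : vec) a : dotp x (a *: y) = a * dotp x y.
Proof. rewrite /dotp mulr_sumr; apply: eq_bigr => k _; by rewrite mxE mulrCA. Qed.

Lemma dotpNr (x y : vec) : dotp x (- y) = - dotp x y.
Proof. rewrite /dotp -sumrN; apply: eq_bigr => k _; by rewrite mxE mulrN. Qed.

Lemma dotp0r (x : vec) : dotp x 0 = 0.
Proof. rewrite /dotp big1 // => k _; by rewrite mxE mulr0. Qed.

Lemma dotpDl (x y z : vec) : dotp (y + z) x = dotp y x + dotp z x.
Proof. by rewrite dotpC dotpDr !(dotpC x). Qed.
Lemma dotpZl (x y : vec) a : dotp (a *: y) x = a * dotp y x.
Proof. by rewrite dotpC dotpZr (dotpC x). Qed.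
Lemma dotpNl (x y : vec) : dotp (- y) x = - dotp y x.
Proof. by rewrite dotpC dotpNr (dotpC x). Qed.

Lemma dotp_sumr (x : vec) n (w : 'I_n -> R) (p : 'I_n -> vec) :
  dotp x (\sum_(k < n) w k *: p k) = \sum_(k < n) w k * dotp x (p k).
Proof.
elim: n w p => [|n IH] w p; first by rewrite !big_ord0 dotp0r.
by rewrite !big_ord_recr /= dotpDr dotpZr IH.
Qed.

Lemma dotp_ge0 (x : vec) : 0 <= dotp x x.
Proof. apply: sumr_ge0 => k _; by rewrite -expr2 sqr_ge0. Qed.

Lemma dotp_eq0 (x : vec) : dotp x x = 0 -> x = 0.
Proof.
move=> h; have h2 : \sum_(k < d) x 0 k ^+ 2 = 0.
  apply: etrans _ h; apply: eq_bigr => k _; by rewrite expr2.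
have H := psumr_eq0P (fun k _ => (sqr_ge0 (x 0 k))) h2.
apply/rowP => k; rewrite mxE.
have /eqP := H k isT.
by rewrite sqrf_eq0 => /eqP.
Qed.

Lemma wcs (a b : vec) e : 0 < e -> 2 * e * dotp a b <= e ^+ 2 * dotp a a + dotp b b.
Proof.
move=> e0; have := dotp_ge0 (e *: a - b).
rewrite !(dotpDl, dotpDr, dotpZl, dotpZr, dotpNl, dotpNr) (dotpC b a).
move=> h; nra.
Qed.

Lemma sphere_dotp (x : vec) : sphere x -> dotp x x = 1.
Proof.
rewrite /sphere /enorm /= => h.
by rewrite -(sqr_sqrtr (dotp_ge0 x)) h expr1n.
Qed.

Lemma dotp_sphere (x : vec) : dotp x x = 1 -> sphere x.
Proof. by rewrite /sphere /enorm /= => ->; rewrite sqrtr1. Qed.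

Lemma ball_dotp (x : vec) : ball_unit x -> dotp x x <= 1.
Proof.
rewrite /ball_unit /enorm /= => h.
rewrite -(sqr_sqrtr (dotp_ge0 x)); have := sqrtr_ge0 (dotp x x); nra.
Qed.

Lemma notball_dotp (x : vec) : ~ ball_unit x -> 1 < dotp x x.
Proof.
move=> h; rewrite ltNge; apply/negP => h1; apply: h.
by rewrite /ball_unit /enorm /= -sqrtr1 ler_sqrt.
Qed.

Lemma enorm_lt (r : vec) e : 0 < e -> enorm r < e -> dotp r r < e ^+ 2.
Proof.
move=> e0; rewrite /enorm => h.
rewrite -(sqr_sqrtr (dotp_ge0 r)); have := sqrtr_ge0 (dotp r r); nra.
Qed.

Lemma lt_enorm (r : vec) e : 0 < e -> dotp r r < e ^+ 2 -> enorm r < e.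
Proof.
move=> e0 h; rewrite /enorm -(ger0_norm (ltW e0)) -sqrtr_sqr ltr_sqrt //.
by rewrite exprn_gt0.
Qed.


Lemma support (V : set vec) (hV : cap_vertices V) v (hv : V v) (f : vec) k :
  0 < k -> dotp f f <= k ^+ 2 -> k <= dotp f v ->
  forall x, cap_body V x -> dotp f x <= dotp f v.
Proof.
move=> k0 hf hk.
have hball : forall x, dotp x x <= 1 -> dotp f x <= k.
  move=> x hx; have := wcs x f k k0; rewrite (dotpC x f) => h.
  have h2 : k * dotp f x <= k * k by nra.
  by rewrite ler_pM2l in h2.
have hpt : forall y, (@sphere R d `|` V) y -> dotp f y <= dotp f v.
  move=> y [/sphere_dotp hy|hy].
    by apply: le_trans hk; apply: hball; rewrite hy.
  have [->|nyv] := eqVneq y v; first by [].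
  case: hV => _ [hout hseg].
  have [x [[t /andP[t0 t1] ex] hx]] : exists x, segment v y x /\ ball_unit x.
    by apply: hseg => // hvy; rewrite hvy eqxx in nyv.
  have hfx := hball _ (ball_dotp _ hx).
  rewrite ex dotpDr !dotpZr in hfx.
  have tn0 : t != 0.
    apply/eqP => tz; apply: (hout v hv).
    by move: hx; rewrite ex tz subr0 scale1r scale0r addr0.
  have tp : 0 < t by rewrite lt0r tn0.
  nra.
move=> x [n [p [w [hp [hw [hw1 ->]]]]]].
rewrite dotp_sumr.
apply: (@le_trans _ _ (\sum_(i < n) w i * dotp f v)).
  by apply: ler_sum => i _; apply: ler_wpM2l; [exact: hw | exact: hpt].
by rewrite -mulr_suml hw1 mul1r.
Qed.

Lemma int_push (K : set vec) z f : interior_e K z -> 0 < dotp f f ->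
  exists2 del : R, 0 < del & K (z + del *: f).
Proof.
move=> [e e0 he] hf.
set F := dotp f f.
have F0 : 0 <= F := dotp_ge0 f.
have F1 : 0 < F + 1 by lra.
exists (e / (F + 1)); first by rewrite divr_gt0.
have hd : e / (F + 1) * (F + 1) = e by rewrite divfK // gt_eqF.
apply: he; rewrite (addrC z) addrK; apply: lt_enorm => //.
rewrite dotpZl dotpZr -/F.
set t := e / (F + 1) in hd *.
have t0 : 0 < t by rewrite /t divr_gt0.
have h1 : F < (F + 1) ^+ 2 by nra.
have t2 : 0 < t ^+ 2 by rewrite exprn_gt0.
rewrite -hd exprMn mulrA -expr2; nra.
Qed.

Lemma cap_mem (V : set vec) v : V v -> cap_body V v.
Proof.
move=> hv; exists 1%N, (fun _ => v), (fun _ => 1); split; first by right.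
split; first by [].
by rewrite !big_ord1 scale1r.
Qed.

Lemma v_boundary (V : set vec) (hV : cap_vertices V) v (hv : V v) :
  boundary_e (cap_body V) v.
Proof.
have D1 : 1 < dotp v v by apply: notball_dotp; case: hV => _ [h _]; exact: h.
split.
  move=> e e0; exists v; first exact: cap_mem.
  by rewrite subrr /enorm dotp0r sqrtr0.
move=> hint.
have D0 := lt_trans ltr01 D1.
have [del del0 hK] := int_push _ _ v hint D0.
have hD : dotp v v <= dotp v v ^+ 2 by nra.
have := support _ hV _ hv v (dotp v v) D0 hD (lexx _) _ hK.
rewrite dotpDr dotpZr; nra.
Qed.


Lemma normalize (w : vec) : 0 < dotp w w ->
  exists s : R, 0 < s /\ s ^+ 2 * dotp w w = 1.
Proof.
move=> W0; exists (Num.sqrt (dotp w w))^-1; split; first by rewrite invr_gt0 sqrtr_gt0.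
by rewrite exprVn sqr_sqrtr ?mulVf ?gt_eqF // ltW.
Qed.

Lemma decomp (u b : vec) : sphere u -> dotp b b <= 1 ->
  exists q bt, sphere q /\ 0 <= bt <= 1 /\ b = bt *: q.
Proof.
move=> hu hb; case: (eqVneq (dotp b b) 0) => [/dotp_eq0 -> | nz].
  by exists u, 0; rewrite scale0r lexx ler01.
have B0 : 0 < dotp b b by rewrite lt0r nz dotp_ge0.
have sn : Num.sqrt (dotp b b) != 0 by rewrite gt_eqF // sqrtr_gt0.
exists ((Num.sqrt (dotp b b))^-1 *: b), (Num.sqrt (dotp b b)); split; last split.
- apply: dotp_sphere; rewrite dotpZl dotpZr mulrA -expr2 exprVn sqr_sqrtr ?mulVf ?gt_eqF //.
  exact: ltW.
- by rewrite sqrtr_ge0 /= -sqrtr1 ler_sqrt.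
- by rewrite scalerA mulfV // scale1r.
Qed.

Lemma ball_pert (a r : vec) eps : 0 < eps -> eps <= 1/2 ->
  dotp a a = 1 - 2 * eps -> dotp r r < (eps / 4) ^+ 2 ->
  dotp (a + 2 *: r) (a + 2 *: r) <= 1.
Proof.
move=> e0 e1 ha hr.
have W := wcs a (2 *: r) eps e0.
rewrite !(dotpDl, dotpDr, dotpZl, dotpZr) ha (dotpC r a) in W *.
have r0 := dotp_ge0 r.
move: W hr; set X := dotp a r; set Q := dotp r r => W hr.
have h : eps * (1 - 2 * eps + 2 * X + 2 * (X + 2 * Q)) <= eps * 1 by nra.
rewrite ler_pM2l // in h. lra.
Qed.

Lemma main_fwd (V : set vec) (hV : cap_vertices V) v (hv : V v) u :
  illuminates (cap_body V) v u -> cap_of v `<=` Hem (- u).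
Proof.
move=> [_ [_ [lam lam0 hint]]] p [sp hpv].
have Pp := sphere_dotp _ sp.
have P0 : 0 < dotp p p by rewrite Pp ltr01.
have P1 : dotp p p <= 1 ^+ 2 by rewrite Pp expr1n.
have [del del0 hK] := int_push _ _ p hint P0.
have := support _ hV _ hv p 1 ltr01 P1 hpv _ hK.
rewrite !(dotpDr, dotpZr) Pp => h; split => //.
rewrite dotpNr; nra.
Qed.

Lemma main_bwd (V : set vec) (hV : cap_vertices V) v (hv : V v) u (hu : sphere u) :
  cap_of v `<=` Hem (- u) -> illuminates (cap_body V) v u.
Proof.
move=> hcap; split => //; split; first exact: v_boundary.
have Du := sphere_dotp _ hu.
have D1 : 1 < dotp v v by apply: notball_dotp; case: hV => _ [h _]; exact: h.
have key : forall w, 1 <= dotp w w -> dotp w w <= dotp w v -> 0 <= dotp w u -> False.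
  move=> w W1 Wv Wu; have [s [s0 hs]] := normalize w (lt_le_trans ltr01 W1).
  have s1 : s <= 1 by nra.
  have sW : 1 <= s * dotp w w by nra.
  have hs1 : sphere (s *: w).
    by apply: dotp_sphere; rewrite dotpZl dotpZr mulrA -expr2 hs.
  have hs2 : 1 <= dotp (s *: w) v by rewrite dotpZl; nra.
  have [_ h] := hcap _ (conj hs1 hs2).
  by move: h; rewrite dotpZl dotpNr; nra.
set D := dotp v v in D1 key *; set c := dotp v u.
have hc : D - 1 < c ^+ 2.
  rewrite ltNge; apply/negP => hc; apply: (key (v - c *: u));
  rewrite !(dotpDl, dotpDr, dotpZl, dotpZr, dotpNl, dotpNr) Du ?(dotpC u v) -/c -/D; nra.
have c0 : c < 0.
  by rewrite ltNge; apply/negP => c0; apply: (key v) => //; exact: ltW.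
set s := - c.
set b0 := v + s *: u.
set M := dotp b0 b0.
have hM : M = D - c ^+ 2.
  rewrite /M /b0 !(dotpDl, dotpDr, dotpZl, dotpZr) Du (dotpC u v) -/c -/D /s; ring.
have M0 : 0 <= M := dotp_ge0 b0.
have M1 : M < 1 by lra.
set eps := (1 - M) / 2.
have eps0 : 0 < eps by rewrite /eps; lra.
have eps1 : eps <= 1/2 by rewrite /eps; lra.
have e0 : 0 < eps / 4 by lra.
exists (s / 2); first by rewrite /s; lra.
exists (eps / 4) => // y hy.
set r := y - (v + (s / 2) *: u).
have hR := enorm_lt r _ e0 hy.
set b := b0 + 2 *: r.
have hb : dotp b b <= 1.
  apply: ball_pert eps0 eps1 _ hR.
  by rewrite -/M /eps; field.
have [q [bt [sq [/andP[bt0 bt1] hbq]]]] := decomp u b hu hb.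
exists 3%N, (fun k : 'I_3 => if val k == 0%N then v else if val k == 1%N then q else - q),
  (fun k : 'I_3 => if val k == 0%N then 1/2 else if val k == 1%N then (1 + bt) / 4 else (1 - bt) / 4).
split.
  move=> k; case: ifP => _; first by right.
  case: ifP => _; left => //.
  by apply: dotp_sphere; rewrite dotpNl dotpNr opprK sphere_dotp.
split.
  move=> k; case: ifP => _; first lra.
  case: ifP => _; lra.
rewrite !big_ord_recl big_ord0 /=; split; first lra.
apply/rowP => k; have := congr1 (fun m : 'M[R]_(1, d) => m 0 k) hbq.
rewrite big_ord0 /b /b0 /r /s !mxE /= addr0 => h; nra.
Qed.

End Aux.

Theorem lemma4 (R : realType) (d : nat) (V : set 'rV[R]_d)
  (hV : cap_vertices V) (v : 'rV[R]_d) (hv : V v) (u : 'rV[R]_d)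
  (hu : sphere u) :
  illuminates (cap_body V) v u <-> cap_of v `<=` Hem (- u).
Proof.
split; [exact: main_fwd | exact: main_bwd].
Qed.
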